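(* Let $T$ be a finite tree endowed with a partial domino tiling, $\mathbb{K}$ a field, and $\boldsymbol{\alpha}=(\alpha_t)_{t\in T}$ a family of invertible elements of $\mathbb{K}$. Then $X_T(\boldsymbol{\alpha})$ is isomorphic to $X_T(\boldsymbol{\beta})$ for some family $\boldsymbol{\beta}=(\beta_t)_{t\in T}$ of invertible elements of $\mathbb{K}$ such that $\beta_s=1$ for every vertex $s$ covered by a domino.
   Context: For a finite tree $T$ write $s-t$ when vertices $s,t$ are adjacent. For a family $\boldsymbol{\alpha}=(\alpha_t)_{t\in T}$ of elements of a field $\mathbb{K}$, $X_T(\boldsymbol{\alpha})$ denotes the affine scheme over $\mathbb{K}$ with coordinates $x_t,x'_t$ ($t\in T$) defined by $x_t x'_t = 1+\alpha_t\prod_{s-t} x_s$ for all vertices $t$. A partial domino tiling of $T$ is a subset of the edges such that every vertex is an end of at most one chosen edge (domino); a vertex is covered if it is an end of a chosen edge. *)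

(* Defs.v *)
From HB Require Import structures.
From mathcomp Require Import all_boot all_order all_algebra.
From mathcomp Require Import mpoly.
Set Implicit Arguments.
Unset Strict Implicit.
Unset Printing Implicit Defensive.
Import GRing.Theory.
Local Open Scope ring_scope.

Definition simple_graph (T : finType) (e : rel T) : Prop :=
  ssrbool.symmetric e /\ ssrbool.irreflexive e.

Definition is_tree (T : finType) (e : rel T) : Prop :=
  [/\ simple_graph e,
      (forall x y : T, connect e x y) &
      (forall s : seq T, uniq s -> (2 < size s)%N -> ~~ cycle e s)].

Definition is_edge (T : finType) (e : rel T) (d : {set T}) : Prop :=
  exists s t, [/\ e s t & d = [set s; t]].

Definition partial_domino_tiling (T : finType) (e : rel T) (D : {set {set T}}) : Prop :=
  (forall d, d \in D -> is_edge e d) /\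
  (forall d1 d2 s, d1 \in D -> d2 \in D -> s \in d1 -> s \in d2 -> d1 = d2).

Definition covered (T : finType) (D : {set {set T}}) (s : T) : Prop :=
  exists2 d, d \in D & s \in d.

(* variables x_t, x'_t, t in T, numbered in 'I_(#|T| + #|T|) *)
Definition nvar (T : finType) := (#|T| + #|T|)%N.
Definition xv (T : finType) (t : T) : 'I_(nvar T) := lshift #|T| (enum_rank t).
Definition xv' (T : finType) (t : T) : 'I_(nvar T) := rshift #|T| (enum_rank t).

Definition polyT (K : fieldType) (T : finType) := {mpoly K[nvar T]}.

Definition rel_XT (K : fieldType) (T : finType) (e : rel T) (alpha : T -> K) (t : T)
  : polyT K T :=
  'X_(xv t) * 'X_(xv' t) - (1 + alpha t *: \prod_(s | e s t) 'X_(xv s)).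

Definition in_ideal_XT (K : fieldType) (T : finType) (e : rel T) (alpha : T -> K)
  (p : polyT K T) : Prop :=
  exists c : T -> polyT K T, p = \sum_(t : T) c t * rel_XT e alpha t.

(* K-algebra morphism K[x]/I_alpha -> K[x]/I_beta given by the images
   f i (polynomials) of the generators: well defined iff every relation
   of I_alpha maps into I_beta *)
Definition subst (K : fieldType) (T : finType) (f : 'I_(nvar T) -> polyT K T)
  (p : polyT K T) : polyT K T :=
  comp_mpoly [tuple f i | i < nvar T] p.

Definition alg_hom_XT (K : fieldType) (T : finType) (e : rel T) (alpha beta : T -> K)
  (f : 'I_(nvar T) -> polyT K T) : Prop :=
  forall t, in_ideal_XT e beta (subst f (rel_XT e alpha t)).

(* X_T(alpha) and X_T(beta) are isomorphic as affine K-schemes, i.e. their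
   coordinate K-algebras K[x,x']/I_alpha and K[x,x']/I_beta are isomorphic *)
Definition XT_isomorphic (K : fieldType) (T : finType) (e : rel T) (alpha beta : T -> K)
  : Prop :=
  exists f g : 'I_(nvar T) -> polyT K T,
    [/\ alg_hom_XT e alpha beta f,
        alg_hom_XT e beta alpha g,
        (forall i, in_ideal_XT e alpha (subst g (f i) - 'X_i)) &
        (forall i, in_ideal_XT e beta (subst f (g i) - 'X_i))].

(* Main.v *)
Require Import Defs.
From HB Require Import structures.
From mathcomp Require Import all_boot all_order all_algebra.
From mathcomp Require Import mpoly.
Set Implicit Arguments.
Unset Strict Implicit.
Unset Printing Implicit Defensive.
Import GRing.Theory.
Local Open Scope ring_scope.

Section Alg.
Variables (K : fieldType) (T : finType) (e : rel T).

Definition scl (lam : T -> K) (i : 'I_(nvar T)) : K :=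
  match split i with inl j => lam (enum_val j) | inr j => (lam (enum_val j))^-1 end.

Definition fsc (a : 'I_(nvar T) -> K) (i : 'I_(nvar T)) : polyT K T := a i *: 'X_i.

Lemma subst_X (f : 'I_(nvar T) -> polyT K T) i : subst f 'X_i = f i.
Proof. by rewrite /subst comp_mpolyXU -tnth_nth tnth_mktuple. Qed.

Lemma scl_x lam t : scl lam (xv t) = lam t.
Proof. by rewrite /scl /xv -/(unsplit (inl _)) unsplitK enum_rankK. Qed.

Lemma scl_x' lam t : scl lam (xv' t) = (lam t)^-1.
Proof. by rewrite /scl /xv' -/(unsplit (inr _)) unsplitK enum_rankK. Qed.

Lemma subst_rel lam alpha t : (forall u, lam u != 0) ->
  subst (fsc (scl lam)) (rel_XT e alpha t) =
  rel_XT e (fun t => alpha t * \prod_(s | e s t) lam s) t.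
Proof.
move=> nz; rewrite /rel_XT /subst.
have hX i : comp_mpoly [tuple fsc (scl lam) i | i < nvar T] 'X_i = fsc (scl lam) i by exact: subst_X.
rewrite rmorphB rmorphD rmorph1 /= comp_mpolyZ.
rewrite rmorphM rmorph_prod /= !hX /fsc scl_x scl_x'.
rewrite -scalerAr -scalerAl scalerA mulVf // scale1r.
rewrite (eq_bigr (fun s => lam s *: 'X_(xv s))); last first.
  by move=> s _; move: (hX (xv s)); rewrite /fsc scl_x.
rewrite scaler_prod -scalerA //.
Qed.

Lemma subst_fg lam mu i : (forall u, mu u * lam u = 1) ->
  subst (fsc (scl mu)) (fsc (scl lam) i) = 'X_i.
Proof.
move=> h; rewrite /fsc /subst comp_mpolyZ -/(subst _ _) subst_X /fsc scalerA.
rewrite /scl; case: split => j; first by rewrite mulrC h scale1r.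
by rewrite -invfM mulrC h invr1 scale1r.
Qed.

Lemma rel_ext (a b : T -> K) t : a t = b t -> rel_XT e a t = rel_XT e b t.
Proof. by rewrite /rel_XT => ->. Qed.

Lemma ideal_rel (a : T -> K) t : in_ideal_XT e a (rel_XT e a t).
Proof.
exists (fun u => if u == t then 1 else 0).
rewrite (bigD1 t) //= eqxx mul1r big1 ?addr0 // => u /negbTE ->; exact: mul0r.
Qed.

Lemma ideal0 (a : T -> K) : in_ideal_XT e a 0.
Proof. by exists (fun _ => 0); rewrite big1 // => u _; rewrite mul0r. Qed.

End Alg.
Section Graph.
Variables (T : finType) (e : rel T).
Hypothesis esym : ssrbool.symmetric e.
Hypothesis eirr : ssrbool.irreflexive e.
Hypothesis acyc : forall s : seq T, uniq s -> (2 < size s)%N -> ~~ cycle e s.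

Lemma leaf_exists (S : {set T}) (l0 : T) : l0 \in S ->
  (forall s, s \in S -> exists2 m, m \in S & e s m) ->
  exists2 l, l \in S & forall u v, u \in S -> v \in S -> e u l -> e v l -> u = v.
Proof.
move=> Hl0 Hp.
case: (boolP [exists l in S, [forall u in S, [forall v in S, e u l ==> e v l ==> (u == v)]]]).
  case/exists_inP=> l Hl /forall_inP H; exists l => // u v Hu Hv Hul Hvl.
  by move: (H u Hu) => /forall_inP /(_ v Hv); rewrite Hul Hvl => /eqP.
move=> /exists_inPn H.
have two : forall z y, z \in S -> y \in S -> e y z ->
    exists2 w, w \in S & e w z && (w != y).
  move=> z y Hz Hy Hyz; move: (H z Hz) => /forall_inPn [u Hu /forall_inPn [v Hv]].
  rewrite !negb_imply => /and3P[Huz Hvz Huv].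
  case: (eqVneq u y) => [Euy|Nuy]; last by exists u; rewrite ?Huz.
  exists v => //; rewrite Hvz /=; apply: contra Huv => /eqP ->; by rewrite Euy.
have walk : forall k, exists z y r, [/\ uniq (z :: y :: r),
    all (fun x => x \in S) (z :: y :: r), path e z (y :: r) & size r = k].
  elim=> [|k [z [y [r [Hu Ha Hpth Hs]]]]].
    case: (Hp _ Hl0) => m Hm Hlm; exists l0, m, [::]; split => //=.
      by rewrite inE andbT; apply: contraTneq Hlm => ->; rewrite eirr.
    by rewrite Hl0 Hm.
    by rewrite Hlm.
  move: (Ha) => /= /and3P[Hz Hy _].
  move: (Hpth) => /= /andP[Hzy _].
  case: (two z y Hz Hy); first by rewrite esym.
  move=> w Hw /andP[Hwz Hwy].
  case: (boolP (w \in z :: y :: r)) => Hin; last first.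
    exists w, z, (y :: r); split => //=.
    - by rewrite /= in Hin Hu *; rewrite Hin Hu.
    - by rewrite Hw /=; exact: Ha.
    - by rewrite Hwz /=; exact: Hpth.
    - by rewrite Hs.
  exfalso.
  have Hwr : w \in r.
    move: Hin; rewrite !inE (negbTE Hwy) /= => /orP[/eqP Ewz|//].
    by move: Hwz; rewrite Ewz eirr.
  clear Hin; case/splitPr: r / Hwr Hu Ha Hpth Hs => r1 r2 Hu Ha Hpth Hs.
  have Hu' : uniq (z :: y :: rcons r1 w).
    by move: Hu; rewrite -cat_rcons -!cat_cons cat_uniq => /andP[].
  have Hs' : (2 < size (z :: y :: rcons r1 w))%N by rewrite /= size_rcons.
  have Hc : cycle e (z :: y :: rcons r1 w).
    move: Hpth; rewrite -cat_rcons -cat_cons cat_path => /andP[Hp1 _].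
    rewrite /cycle rcons_path Hp1 /=.
    by rewrite last_rcons.
  by rewrite (negbTE (acyc Hu' Hs')) in Hc.
case: (walk #|T|) => z [y [r [Hu _ _ Hs]]].
move: (max_card (mem (z :: y :: r))); rewrite (card_uniqP Hu) /= Hs.
by move=> /ltnW; rewrite ltnn.
Qed.

Variable (K : fieldType) (M : T -> T -> Prop).
Hypothesis Me : forall a b, M a b -> e a b.
Hypothesis Msym : forall a b, M a b -> M b a.
Hypothesis Mfun : forall a b c, M a b -> M a c -> b = c.

Lemma solve n : forall (S : {set T}) (c : T -> K), (#|S| <= n)%N ->
  (forall s, c s != 0) -> (forall s, s \in S -> exists2 m, m \in S & M s m) ->
  exists lam : T -> K, (forall u, lam u != 0) /\
    forall s, s \in S -> \prod_(u in S | e u s) lam u = c s.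
Proof.
elim: n => [|n IH] S c HS Hc HM.
  exists (fun _ => 1); split => [u|s Hs]; first exact: oner_neq0.
  by move: HS; rewrite leqn0 cards_eq0 => /eqP HS; rewrite HS inE in Hs.
case: (set_0Vmem S) => [-> | [l0 Hl0]].
  by exists (fun _ => 1); split => [u|s]; rewrite ?oner_neq0 ?inE.
have [l Hl Hleaf] : exists2 l, l \in S &
    forall u v, u \in S -> v \in S -> e u l -> e v l -> u = v.
  apply: (leaf_exists Hl0) => s /HM [m Hm /Me]; by exists m.
case: (HM l Hl) => m Hm Hlm.
have elm : e l m by exact: Me.
have eml : e m l by rewrite esym.
have Nlm : l != m by apply: contraTneq elm => ->; rewrite eirr.
have leaf : forall u, u \in S -> e u l -> u = m.
  by move=> u Hu Hul; apply: Hleaf.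
pose S' := S :\ l :\ m.
have inS' : forall u, (u \in S') = [&& u != m, u != l & u \in S].
  by move=> u; rewrite !in_setD1.
have HS' : (#|S'| <= n)%N.
  have : (#|S :\ l| <= n)%N.
    by move: HS; rewrite (cardsD1 l S) Hl.
  apply: leq_trans; apply: subset_leq_card; exact: subsetDl.
pose c' := fun s => if e m s then c s / c l else c s.
have Hc' : forall s, c' s != 0.
  by move=> s; rewrite /c'; case: (e m s); rewrite ?mulf_neq0 ?invr_eq0.
have HM' : forall s, s \in S' -> exists2 q, q \in S' & M s q.
  move=> s; rewrite inS' => /and3P[Hsm Hsl Hs].
  case: (HM s Hs) => q Hq Hsq; exists q => //.
  rewrite inS' Hq andbT; apply/andP; split.
    apply: contra Hsl => /eqP Eq; subst q.
    by apply/eqP; apply: (Mfun (Msym Hsq)); exact: Msym.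
  apply: contra Hsm => /eqP Eq; subst q.
  by apply/eqP; apply: (Mfun (Msym Hsq)).
case: (IH S' c' HS' Hc' HM') => lam' [Hnz' Hsol'].
pose P := \prod_(u in S' | e u m) lam' u.
have HP : P != 0 by apply/prodf_neq0 => u _.
pose lam := fun u => if u == m then c l else if u == l then c m / P else lam' u.
have Hnz : forall u, lam u != 0.
  move=> u; rewrite /lam; case: (u == m) => //; case: (u == l) => //.
  by rewrite mulf_neq0 ?invr_eq0.
exists lam; split => // s Hs.
have decomp : \prod_(u in S | e u s) lam u =
    (if e l s then lam l else 1) * ((if e m s then lam m else 1) *
      \prod_(u in S' | e u s) lam' u).
  rewrite [LHS]big_mkcond [LHS](bigD1 l) //= Hl [X in _ * X = _](bigD1 m) /=; last by rewrite eq_sym.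
  rewrite Hm /=; congr (_ * (_ * _)).
  rewrite [RHS]big_mkcond [RHS](bigD1 l) //= [X in _ = _ * X](bigD1 m) /=; last by rewrite eq_sym.
  rewrite !inS' eqxx /= andbF mul1r.
  rewrite eqxx /= mul1r.
  apply: eq_bigr => u /andP[Nul Num].
  rewrite inS' Nul Num /= /lam (negbTE Nul) (negbTE Num) //.
rewrite decomp.
case: (eqVneq s l) => [->|Nsl].
  rewrite eirr eml mul1r /lam eqxx big1 ?mulr1 //.
  move=> u /andP[]; rewrite inS' => /and3P[Num _ Hu] Hul.
  by move: Num; rewrite (leaf u Hu Hul) eqxx.
case: (eqVneq s m) => [->|Nsm].
  rewrite elm eirr /lam (negbTE Nlm) eqxx.
  by rewrite mul1r divfK.
have Hs' : s \in S' by rewrite inS' Nsm Nsl Hs.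
have els : e l s = false.
  apply/negP => els; move: Nsm; rewrite (leaf s Hs) ?eqxx //.
  by rewrite esym.
rewrite els mul1r (Hsol' s Hs') /c' /lam eqxx.
by case: (e m s); rewrite ?mul1r // mulrC divfK.
Qed.

End Graph.

Theorem mainTheorem3 (T : finType) (e : rel T) (D : {set {set T}})
  (K : fieldType) (alpha : T -> K) :
  is_tree e -> partial_domino_tiling e D ->
  (forall t, alpha t != 0) ->
  exists beta : T -> K,
    [/\ (forall t, beta t != 0),
        (forall s, covered D s -> beta s = 1) &
        XT_isomorphic e alpha beta].
Proof.
move=> [[esym eirr] _ acyc] [Dedge Ddisj] Hal.
pose M := fun a b : T => exists2 d, d \in D & (d = [set a; b] /\ a != b).
have Me : forall a b, M a b -> e a b.
  move=> a b [d Hd [Ed Nab]]; case: (Dedge d Hd) => x [y [Exy Edxy]].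
  have Ha : a \in [set x; y] by rewrite -Edxy Ed set21.
  have Hb : b \in [set x; y] by rewrite -Edxy Ed set22.
  move: Ha Hb; rewrite !in_set2 => /orP[]/eqP Ea /orP[]/eqP Eb; subst a b.
  - by move: Nab; rewrite eqxx.
  - done.
  - by rewrite esym.
  - by move: Nab; rewrite eqxx.
have Msym : forall a b, M a b -> M b a.
  move=> a b [d Hd [Ed Nab]]; exists d => //; split; first by rewrite Ed setUC.
  by rewrite eq_sym.
have Mfun : forall a b c, M a b -> M a c -> b = c.
  move=> a b c [d1 H1 [E1 N1]] [d2 H2 [E2 N2]].
  have E12 : d1 = d2 by apply: (Ddisj d1 d2 a) => //; rewrite ?E1 ?E2 set21.
  have : b \in d2 by rewrite -E12 E1 set22.
  by rewrite E2 in_set2 eq_sym (negbTE N1) /= => /eqP.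
pose S := [set s | [exists d in D, s \in d]].
have Scov : forall s, covered D s -> s \in S.
  by move=> s [d Hd Hsd]; rewrite inE; apply/exists_inP; exists d.
have HM : forall s, s \in S -> exists2 m, m \in S & M s m.
  move=> s; rewrite inE => /exists_inP [d Hd Hsd].
  case: (Dedge d Hd) => x [y [Exy Edxy]].
  have Nxy : x != y by apply: contraTneq Exy => ->; rewrite eirr.
  move: (Hsd); rewrite Edxy in_set2 => /orP[]/eqP Es; subst s.
  - exists y; last by exists d.
    by rewrite inE; apply/exists_inP; exists d => //; rewrite Edxy set22.
  - exists x; last by exists d => //; split; [rewrite Edxy setUC | rewrite eq_sym].
    by rewrite inE; apply/exists_inP; exists d => //; rewrite Edxy set21.
have Hc : forall s, (alpha s)^-1 != 0 by move=> s; rewrite invr_eq0.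
case: (solve esym eirr acyc Me Msym Mfun (leqnn #|S|) Hc HM) => lam0 [Hnz0 Hsol].
pose lam := fun u => if u \in S then lam0 u else 1.
have Hnz : forall u, lam u != 0 by move=> u; rewrite /lam; case: ifP => // _; exact: oner_neq0.
pose beta := fun t => alpha t * \prod_(s | e s t) lam s.
exists beta; split.
- by move=> t; rewrite mulf_neq0 //; apply/prodf_neq0 => u _.
- move=> s /Scov Hs; rewrite /beta.
  have -> : \prod_(u | e u s) lam u = \prod_(u in S | e u s) lam0 u.
    rewrite big_mkcond [RHS]big_mkcond; apply: eq_bigr => u _.
    by rewrite /lam; case: (u \in S); case: (e u s).
  by rewrite Hsol // mulfV.
- exists (fsc (scl lam)), (fsc (scl (fun u => (lam u)^-1))); split.
  + move=> t; rewrite subst_rel //; exact: ideal_rel.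
  + move=> t; rewrite subst_rel; last by move=> u; rewrite invr_eq0.
    rewrite (@rel_ext _ _ _ _ alpha); first exact: ideal_rel.
    rewrite /beta prodfV -mulrA mulfV ?mulr1 //; apply/prodf_neq0 => u _; exact: Hnz.
  + move=> i; rewrite subst_fg ?subrr; first exact: ideal0.
    by move=> u; rewrite mulVf.
  + move=> i; rewrite subst_fg ?subrr; first exact: ideal0.
    by move=> u; rewrite mulfV.
Qed.
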